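(* Let $\alpha\in(0,1)$, $m=\alpha n$, $c\in\mathbb{N}$, $q=2^{m+c}$. Then for all $\gamma>1$ and $k\ge 3.6-\frac54\log_2\alpha$, setting $f=\frac{k\ln m}{m}$, there exists $N_k>0$ such that for all $n\ge N_k$, $\epsilon(n,m,q,f)\le\gamma\frac{2^c}{q-1}$.
   Context: For $q\ge2$: $w^*(n,q)=\max\{w\ge0:\sum_{j=1}^w\binom{n}{j}\le q-1\}$, $r(n,q)=q-1-\sum_{w=1}^{w^*(n,q)}\binom{n}{w}$, and $$\epsilon(n,m,q,f)=\frac{1}{q-1}\left[\sum_{w=1}^{w^*(n,q)}\binom{n}{w}\frac{1}{2^m}(1+(1-2f)^w)^m+\frac{r(n,q)}{2^m}(1+(1-2f)^{w^*(n,q)+1})^m\right].$$ $\ln$ is the natural logarithm. *)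

(* Defs.v *)
From Stdlib Require Import Reals Lra.
Open Scope R_scope.

Fixpoint binsum (n w : nat) : R :=
  match w with
  | O => 0
  | S w' => binsum n w' + Binomial.C n w
  end.

Fixpoint wsearch (n : nat) (q : R) (w : nat) : nat :=
  match w with
  | O => O
  | S w' => if Rle_dec (binsum n w) (q - 1) then w else wsearch n q w'
  end.

(* w*(n,q) = max{ w >= 0 : sum_{j=1}^w binom(n,j) <= q-1 }.
   The search is restricted to w <= n (binomials vanish beyond n); this
   agrees with the paper whenever q - 1 < 2^n - 1, the only case where the
   max is finite. *)
Definition wstar (n : nat) (q : R) : nat := wsearch n q n.

Definition rem (n : nat) (q : R) : R := q - 1 - binsum n (wstar n q).

Fixpoint epssum (n m : nat) (f : R) (W : nat) : R :=
  match W with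
  | O => 0
  | S W' => epssum n m f W'
            + Binomial.C n W * / 2 ^ m * (1 + (1 - 2 * f) ^ W) ^ m
  end.

Definition epsilon (n m : nat) (q f : R) : R :=
  / (q - 1) *
  (epssum n m f (wstar n q)
   + rem n q / 2 ^ m * (1 + (1 - 2 * f) ^ (S (wstar n q))) ^ m).

Definition log2 (x : R) : R := ln x / ln 2.

(* Main.v *)
Require Import Defs.
From Stdlib Require Import Reals Lra Lia.
Open Scope R_scope.


Lemma exp_le' x y : x <= y -> exp x <= exp y.
Proof. intros [H|H]; [left; apply exp_increasing; auto| subst; lra]. Qed.

Lemma ln_le' x y : 0 < x -> x <= y -> ln x <= ln y.
Proof. intros Hx [H|H]; [left; apply ln_increasing; auto| subst; lra]. Qed.

Lemma ln_sub1 y : 0 < y -> ln y <= y - 1.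
Proof. intros Hy. pose proof (exp_ineq1_le (ln y)). rewrite exp_ln in H; lra. Qed.

Lemma exp_pow a n : exp a ^ n = exp (a * INR n).
Proof.
  induction n as [|n IH]; simpl pow.
  - simpl; rewrite Rmult_0_r, exp_0; lra.
  - rewrite IH, <- exp_plus, S_INR. f_equal; ring.
Qed.

Lemma exp_sq L : 0 <= L -> L * L / 4 <= exp L.
Proof.
  intros HL. replace L with (L/2 + L/2) at 3 by field. rewrite exp_plus.
  pose proof (exp_ineq1_le (L/2)).
  assert (0 <= 1 + L/2) by lra.
  assert (L/2 <= exp (L/2)) by lra.
  assert (0 <= L/2) by lra.
  replace (L*L/4) with ((L/2)*(L/2)) by field.
  apply Rmult_le_compat; lra.
Qed.

Lemma ln2_lt : ln 2 < 3/4.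
Proof.
  assert (H: 2 < exp (3/4)).
  { replace (3/4) with (1/8 * INR 6) by (simpl; lra). rewrite <- exp_pow.
    pose proof (exp_ineq1_le (1/8)).
    apply Rlt_le_trans with ((1+1/8)^6). simpl; lra.
    apply pow_incr; lra. }
  rewrite <- (ln_exp (3/4)). apply ln_increasing; lra.
Qed.

Lemma ln2_pos : 0 < ln 2.
Proof. pose proof ln_lt_2; lra. Qed.

Lemma exp1_ge2 : 2 <= exp 1.
Proof. pose proof (exp_ineq1_le 1); lra. Qed.

Lemma exp_dom C : exists L0, forall L, L0 <= L -> C * L <= exp L.
Proof.
  exists (Rmax 0 (4*C)). intros L HL.
  pose proof (Rmax_l 0 (4*C)); pose proof (Rmax_r 0 (4*C)).
  pose proof (exp_sq L ltac:(lra)).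
  assert (C * L <= L*L/4) by nra. lra.
Qed.

Lemma fact_lb w : (INR w / exp 1) ^ w <= INR (Factorial.fact w).
Proof.
  induction w as [|w IH].
  - simpl; lra.
  - rewrite fact_simpl, mult_INR.
    destruct w as [|w'].
    + simpl. pose proof exp1_ge2.
      assert (0 < /exp 1 <= 1/2). { split. apply Rinv_0_lt_compat; lra.
        unfold Rdiv; rewrite Rmult_1_l. apply Rinv_le_contravar; lra. }
      lra.
    + set (w := S w') in *.
      assert (Hw: 0 < INR w) by (apply lt_0_INR; unfold w; lia).
      pose proof (exp_pos 1) as He.
      (* ((w+1)/e)^(w+1) = (w+1)/e * ((w+1)/w)^w * (w/e)^w  and ((w+1)/w)^w <= e *)
      assert (Hk: ((INR (S w))/INR w) ^ w <= exp 1).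
      { replace (INR (S w) / INR w) with (1 + /INR w) by (rewrite S_INR; field; lra).
        apply Rle_trans with (exp (/INR w) ^ w).
        apply pow_incr. split. assert (0 < /INR w) by (apply Rinv_0_lt_compat; lra). lra.
        apply exp_ineq1_le.
        rewrite exp_pow. right; f_equal; field; lra. }
      assert (Eq: (INR (S w) / exp 1) ^ S w =
                  INR (S w) / exp 1 * ((INR (S w)/INR w)^w * (INR w / exp 1)^w)).
      { rewrite <- Rpow_mult_distr, <- tech_pow_Rmult. f_equal. f_equal. field. lra. }
      rewrite Eq.
      assert (0 <= (INR w / exp 1)^w) by (apply pow_le; unfold Rdiv; apply Rmult_le_pos; [lra| left; apply Rinv_0_lt_compat; lra]).
      assert (0 < INR (S w)) by (apply lt_0_INR; lia).
      apply Rle_trans with (INR (S w) / exp 1 * (exp 1 * (INR w / exp 1)^w)).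
      { apply Rmult_le_compat_l. unfold Rdiv; apply Rmult_le_pos; [lra|left; apply Rinv_0_lt_compat; lra].
        apply Rmult_le_compat_r; lra. }
      replace (INR (S w) / exp 1 * (exp 1 * (INR w / exp 1) ^ w)) with
        (INR (S w) * (INR w / exp 1) ^ w) by (field; lra).
      apply Rmult_le_compat_l; lra.
Qed.

Lemma Rdiv_le_0_compat a b : 0 <= a -> 0 < b -> 0 <= a / b.
Proof. intros. unfold Rdiv. apply Rmult_le_pos; auto. left; apply Rinv_0_lt_compat; auto. Qed.


Lemma fact_nat j w : (Factorial.fact (j + w) <= (j + w) ^ w * Factorial.fact j)%nat.
Proof.
  induction w as [|w IH].
  - rewrite Nat.add_0_r; simpl; lia.
  - replace (j + S w)%nat with (S (j + w)) by lia.
    rewrite fact_simpl. simpl Nat.pow.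
    assert ((j+w)^w <= (S (j+w))^w)%nat by (apply Nat.pow_le_mono_l; lia).
    assert (Factorial.fact (j+w) <= S (j+w) ^ w * Factorial.fact j)%nat.
    { eapply Nat.le_trans; [apply IH|]. apply Nat.mul_le_mono_r; auto. }
    replace ((S (j + w) ^ w + (j + w) * S (j + w) ^ w) * Factorial.fact j)%nat with (S (j+w) * (S (j + w) ^ w * Factorial.fact j))%nat by ring. apply Nat.mul_le_mono_l. exact H0.
Qed.

Lemma C_nonneg n w : 0 <= Binomial.C n w.
Proof.
  unfold Binomial.C. pose proof (INR_fact_lt_0 n); pose proof (INR_fact_lt_0 w);
  pose proof (INR_fact_lt_0 (n-w)).
  left. unfold Rdiv. apply Rmult_lt_0_compat; auto. apply Rinv_0_lt_compat; nra.
Qed.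

Lemma C_le n w : (w <= n)%nat -> Binomial.C n w <= INR n ^ w / INR (Factorial.fact w).
Proof.
  intros H. unfold Binomial.C.
  pose proof (fact_nat (n - w) w) as F. replace (n - w + w)%nat with n in F by lia.
  apply le_INR in F. rewrite mult_INR, pow_INR in F.
  pose proof (INR_fact_lt_0 n); pose proof (INR_fact_lt_0 w);
  pose proof (INR_fact_lt_0 (n-w)).
  unfold Rdiv. rewrite Rinv_mult.
  apply Rle_trans with (INR n ^ w * INR (Factorial.fact (n - w)) * (/ INR (Factorial.fact w) * / INR (Factorial.fact (n - w)))).
  apply Rmult_le_compat_r; auto. left; apply Rmult_lt_0_compat; apply Rinv_0_lt_compat; auto.
  right; field; lra.
Qed.

Lemma binsum_sum n w : binsum n w = sum_f_R0 (fun i => Binomial.C n i) w - 1.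
Proof.
  induction w as [|w IH]; simpl.
  - unfold Binomial.C. simpl. rewrite Nat.sub_0_r. field. apply INR_fact_neq_0.
  - rewrite IH. ring.
Qed.

Lemma binsum_full n : binsum n n = 2 ^ n - 1.
Proof.
  rewrite binsum_sum. replace 2 with (1+1) by ring. rewrite Binomial.binomial.
  f_equal. apply sum_eq. intros; rewrite !pow1; ring.
Qed.

Lemma wsearch_spec n q : 0 <= q - 1 -> forall w0,
  let w := wsearch n q w0 in
  (w <= w0)%nat /\ binsum n w <= q - 1 /\ (w = w0 \/ q - 1 < binsum n (S w)).
Proof.
  intros Hq w0. induction w0 as [|w0 IH]; simpl.
  - split; [lia|split; [simpl; lra| auto]].
  - destruct (Rle_dec (binsum n w0 + Binomial.C n (S w0)) (q - 1)) as [Hle|Hgt].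
    + split; [lia| split; [exact Hle| auto]].
    + destruct IH as [IH1 [IH2 IH3]]. split; [lia| split; [exact IH2|]].
      right. destruct IH3 as [E|E]; [rewrite E; simpl; lra| exact E].
Qed.


Lemma hform (x : R) (m w : nat) : 0 <= x <= 1 ->
  / 2 ^ m * (1 + x ^ w) ^ m = ((1 + x^w)/2) ^ m.
Proof. intros. unfold Rdiv. rewrite Rpow_mult_distr, pow_inv. ring. Qed.

Lemma xw_bound (f : R) (w : nat) : 0 <= f <= 1/2 ->
  0 <= (1 - 2*f)^w <= exp (-(2*f*INR w)).
Proof.
  intros Hf. split. apply pow_le; lra.
  replace (-(2*f*INR w)) with ((-(2*f)) * INR w) by ring. rewrite <- exp_pow.
  apply pow_incr. pose proof (exp_ineq1_le (-(2*f))). lra.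
Qed.

Lemma h_common (y : R) (m : nat) : 0 <= y <= 1 ->
  ((1 + y)/2)^m <= exp (- INR m * (1 - y) / 2).
Proof.
  intros Hy. replace (- INR m * (1 - y) / 2) with ((-(1-y)/2) * INR m) by field.
  rewrite <- exp_pow. apply pow_incr. pose proof (exp_ineq1_le (-(1-y)/2)). lra.
Qed.


Lemma C_le_pow n w : (w <= n)%nat -> Binomial.C n w <= INR n ^ w.
Proof.
  intros H. eapply Rle_trans; [apply C_le; auto|].
  assert (H0: (1 <= Factorial.fact w)%nat) by (pose proof (Factorial.lt_O_fact w); lia). apply le_INR in H0. simpl in H0.
  pose proof (pow_le (INR n) w (pos_INR n)).
  unfold Rdiv. rewrite <- (Rmult_1_r (INR n ^ w)) at 2. apply Rmult_le_compat_l; auto.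
  rewrite <- Rinv_1. apply Rinv_le_contravar; lra.
Qed.

Lemma C_le_ent n w : (1 <= w <= n)%nat ->
  Binomial.C n w <= (exp 1 * INR n / INR w) ^ w.
Proof.
  intros H. eapply Rle_trans; [apply C_le; lia|].
  assert (Hw: 0 < INR w) by (apply lt_0_INR; lia).
  pose proof (fact_lb w). pose proof (exp_pos 1).
  assert (0 < (INR w / exp 1)^w) by (apply pow_lt; unfold Rdiv; apply Rmult_lt_0_compat; [lra| apply Rinv_0_lt_compat; lra]).
  apply Rle_trans with (INR n ^ w / (INR w / exp 1)^w).
  { unfold Rdiv. apply Rmult_le_compat_l. apply pow_le, pos_INR.
    apply Rinv_le_contravar; auto. }
  right. unfold Rdiv. rewrite <- pow_inv, <- Rpow_mult_distr. f_equal.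
  rewrite Rinv_mult, Rinv_inv. ring.
Qed.

Lemma ln_le_sub1' y : 0 < y -> ln y <= y - 1.
Proof. apply ln_sub1. Qed.


Definition Acst alpha k := ln (2 * exp 1 * k / alpha).
Definition t1c alpha k := (Acst alpha k + 1)/(k/2 - 1).
Definition etac alpha k L := exp (-(L / t1c alpha k)).
Definition Kc alpha k L := k * (1 - etac alpha k L).
Definition vTc lam L := (L + ln (/lam))/L.

Lemma Acst_pos alpha k : 0 < alpha < 1 -> 2 < k -> 0 < Acst alpha k.
Proof.
  intros Ha Hk. unfold Acst. rewrite <- ln_1. apply ln_increasing. lra.
  pose proof exp1_ge2. apply Rlt_le_trans with (2*exp 1*k). nra.
  unfold Rdiv. rewrite <- (Rmult_1_r (2*exp 1*k)) at 1. apply Rmult_le_compat_l. nra.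
  rewrite <- Rinv_1. apply Rinv_le_contravar; lra.
Qed.

Lemma point (alpha k lam delta : R) (n m w : nat) :
  0 < alpha < 1 -> INR m = alpha * INR n ->
  1 <= ln (INR m) -> 2*k*ln (INR m) <= INR m -> 2 < k ->
  0 < lam <= 1 -> 0 < delta <= 1 ->
  vTc lam (ln (INR m)) <= Kc alpha k (ln (INR m)) ->
  Acst alpha k - Kc alpha k (ln (INR m)) / vTc lam (ln (INR m)) <= - delta ->
  (1 <= w <= n)%nat ->
  / 2^m * (1 + (1-2*(k * ln (INR m) / INR m))^w)^m <= exp lam / 2^m \/
  Binomial.C n w * (/ 2^m * (1 + (1-2*(k * ln (INR m) / INR m))^w)^m)
    <= (INR n * exp (-(k*ln (INR m)/2)))^w
       + exp (-(delta*INR m/(4*k*ln (INR m)))) * exp(-(delta/2))^w.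
Proof.
  intros Ha Hmn HL Hkm Hk Hlam Hdel HvK HAK Hw.
  set (mR := INR m) in *. set (L := ln mR) in *.
  assert (HmR: 0 < mR) by nra.
  set (f := k * L / mR).
  assert (Hf: 0 <= f <= 1/2).
  { unfold f; split. unfold Rdiv; apply Rmult_le_pos; [nra| left; apply Rinv_0_lt_compat; lra].
    apply Rmult_le_reg_r with mR; auto. unfold Rdiv. rewrite Rmult_assoc, Rinv_l; lra. }
  set (wR := INR w).
  assert (HwR: 1 <= wR) by (unfold wR; apply (le_INR 1); lia).
  set (u := 2*f*wR).
  assert (Hu: mR * u = 2*k*L*wR) by (unfold u, f; field; lra).
  assert (Hu0 : 0 <= u) by (unfold u; nra).
  set (y := (1 - 2*f)^w).
  pose proof (xw_bound f w Hf) as Hy. fold y in Hy. fold wR u in Hy.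
  assert (Hy1 : y <= 1). { pose proof (exp_le' (-u) 0 ltac:(lra)). rewrite exp_0 in H. lra. }
  set (h := / 2^m * (1 + y)^m).
  assert (Hh0 : 0 <= h). { unfold h. apply Rmult_le_pos. left; apply Rinv_0_lt_compat, pow_lt; lra. apply pow_le; lra. }
  assert (Hhc : h <= exp (- mR * (1 - exp (-u)) / 2)).
  { unfold h, y; rewrite hform; [|lra]. fold y. eapply Rle_trans; [apply h_common; lra|].
    apply exp_le'. fold mR. assert (0 <= mR * (exp (-u) - y)) by nra. lra. }
  destruct (Rle_dec (L + ln (/lam)) u) as [Hbig|Hnb].
  { left. unfold h. unfold Rdiv. rewrite (Rmult_comm (exp lam)). apply Rmult_le_compat_l.
    left; apply Rinv_0_lt_compat, pow_lt; lra.
    apply Rle_trans with (exp y ^ m). apply pow_incr. pose proof (exp_ineq1_le y); lra.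
    rewrite exp_pow. apply exp_le'. fold mR.
    assert (exp (-u) <= lam / mR).
    { apply Rle_trans with (exp (-(L + ln (/lam)))). apply exp_le'; lra.
      rewrite Ropp_plus_distr, exp_plus, exp_Ropp, exp_Ropp. unfold L. rewrite exp_ln, exp_ln; auto.
      2: apply Rinv_0_lt_compat; lra. rewrite Rinv_inv. right; field; lra. }
    apply Rmult_le_reg_r with (/mR). apply Rinv_0_lt_compat; lra.
    replace (lam * /mR) with (lam/mR) by reflexivity. rewrite Rmult_assoc, Rinv_r; lra. }
  right.
  set (E := exp (-(delta*mR/(4*k*L)))).
  set (a := INR n * exp (-(k*L/2))).
  assert (HE : 0 <= E * exp (-(delta/2))^w).
  { apply Rmult_le_pos; [left; apply exp_pos| apply pow_le; left; apply exp_pos]. }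
  assert (Ha0 : 0 <= a^w).
  { apply pow_le. unfold a. apply Rmult_le_pos; [apply pos_INR| left; apply exp_pos]. }
  destruct (Rle_dec u 1) as [HA|HB].
  {
    assert (Heu : exp (-u) <= 1 - u/2).
    { rewrite exp_Ropp. pose proof (exp_ineq1_le u).
      apply Rle_trans with (/(1+u)). apply Rinv_le_contravar; lra.
      apply Rmult_le_reg_r with (1+u). lra. rewrite Rinv_l; [|lra]. nra. }
    assert (Hh : h <= exp (-(k*L/2)) ^ w).
    { rewrite exp_pow. eapply Rle_trans; [exact Hhc|]. apply exp_le'. fold wR.
      assert (mR * (1 - exp (-u)) >= mR * (u/2)) by nra. nra. }
    assert (HC := C_le_pow n w ltac:(lia)).
    apply Rle_trans with (a^w). 2: lra.
    unfold a. rewrite Rpow_mult_distr. apply Rmult_le_compat; auto. apply C_nonneg. }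
  assert (Hu1 : 1 < u) by lra.
  assert (HLpos : 0 < L) by lra.
  set (t := L / u).
  assert (Ht : 0 < t) by (unfold t; apply Rdiv_lt_0_compat; lra).
  set (A := Acst alpha k).
  assert (HA0 : 0 < A) by (apply Acst_pos; auto).
  set (Q := exp 1 * INR n / INR w * exp (- mR * (1 - exp (-u)) / (2*wR))).
  assert (HCh : Binomial.C n w * h <= Q ^ w).
  { unfold Q. rewrite Rpow_mult_distr. apply Rmult_le_compat; auto. apply C_nonneg.
    apply C_le_ent; lia. rewrite exp_pow. fold wR. replace (- mR * (1 - exp (- u)) / (2 * wR) * wR) with (- mR * (1 - exp (- u)) / 2) by (field; lra). auto. }
  assert (HnR : INR n = mR / alpha) by (rewrite Hmn; field; lra).
  assert (HQ1 : exp 1 * INR n / INR w = (2 * exp 1 * k / alpha) * t).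
  { fold wR. rewrite HnR. unfold t. assert (wR = u * mR / (2*k*L)) by (apply Rmult_eq_reg_l with (2*k*L); [|nra]; rewrite <- Hu; field; nra).
    rewrite H. field. repeat split; lra. }
  assert (HQ2 : mR * (1 - exp (-u)) / (2*wR) = k * t * (1 - exp (-u))).
  { unfold t. apply Rmult_eq_reg_r with (2*wR*u); [|nra].
    replace (mR * (1 - exp (- u)) / (2 * wR) * (2 * wR * u)) with ((mR*u) * (1 - exp (-u))) by (field; lra).
    rewrite Hu. field. lra. }
  assert (HQ : Q = exp (A + ln t - k * t * (1 - exp (-u)))).
  { unfold Q. rewrite HQ1. replace (- mR * (1 - exp (- u)) / (2 * wR)) with (- (mR * (1 - exp (- u)) / (2 * wR))) by (field; lra).
    rewrite HQ2. replace (A + ln t - k * t * (1 - exp (- u))) with ((A + ln t) + - (k * t * (1 - exp (- u)))) by ring.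
    rewrite exp_plus. f_equal. rewrite exp_plus. unfold A, Acst.
    rewrite exp_ln, exp_ln; auto. apply Rdiv_lt_0_compat; [|lra]. pose proof exp1_ge2. nra. }
  assert (Hexp : A + ln t - k * t * (1 - exp (-u)) <= - delta).
  { destruct (Rle_dec (t1c alpha k) t) as [HB1|HB2].
    -
      assert (exp (-u) <= 1/2). { apply Rle_trans with (exp (- (1))). apply exp_le'; lra.
        rewrite exp_Ropp. pose proof exp1_ge2. apply Rmult_le_reg_r with (exp 1). lra.
        rewrite Rinv_l; lra. }
      pose proof (ln_sub1 t Ht).
      assert (k*t*(1 - exp (-u)) >= k*t/2).
      { assert (0 <= (k*t) * ((1 - exp (-u)) - 1/2)) by (apply Rmult_le_pos; nra). nra. }
      unfold t1c in HB1. fold A in HB1.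
      assert ((k/2-1) * ((A+1)/(k/2-1)) = A + 1) by (field; lra).
      assert ((k/2-1) * t >= A + 1) by nra.
      lra.
    -
      assert (Ht1 : 0 < t1c alpha k). { unfold t1c. apply Rdiv_lt_0_compat; fold A; lra. }
      assert (Hlt : L / t1c alpha k < u).
      { unfold t in HB2. apply Rnot_le_lt in HB2.
        apply Rmult_lt_reg_r with (t1c alpha k); auto. unfold Rdiv. rewrite Rmult_assoc, Rinv_l; [|lra].
        apply Rmult_lt_reg_r with (/u). apply Rinv_0_lt_compat; lra.
        replace (u * t1c alpha k * / u) with (t1c alpha k) by (field; lra). lra. }
      assert (Heta : exp (-u) <= etac alpha k L) by (unfold etac; apply exp_le'; lra).
      fold (Kc alpha k L) in HvK, HAK |- *.
      set (K := Kc alpha k L) in *.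
      assert (HK : k * t * (1 - exp (-u)) >= K * t).
      { unfold K, Kc. assert (0 <= (k*t) * (etac alpha k L - exp (-u))) by (apply Rmult_le_pos; nra). nra. }
      set (vT := vTc lam L) in *.
      assert (Hlnl : 0 <= ln (/lam)). { rewrite <- ln_1. apply ln_le'. lra. rewrite <- Rinv_1. apply Rinv_le_contravar; lra. }
      assert (HvT1 : 1 <= vT). { unfold vT, vTc. apply Rmult_le_reg_r with L; auto. unfold Rdiv. rewrite Rmult_assoc, Rinv_l; lra. }
      set (tT := / vT).
      assert (HtT : 0 < tT <= 1). { unfold tT. split. apply Rinv_0_lt_compat; lra. rewrite <- Rinv_1. apply Rinv_le_contravar; lra. }
      assert (HttT : tT < t).
      { unfold tT, vT, vTc, t. rewrite Rinv_div. apply Rmult_lt_reg_r with (u * (L + ln (/lam))). nra.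
        replace (L / (L + ln (/ lam)) * (u * (L + ln (/ lam)))) with (L * u) by (field; lra).
        replace (L / u * (u * (L + ln (/ lam)))) with (L * (L + ln (/lam))) by (field; lra). nra. }
      assert (Hlnt : ln t - ln tT <= K * (t - tT)).
      { assert (ln t - ln tT = ln (t / tT)). { unfold Rdiv. rewrite ln_mult, ln_Rinv; try lra. apply Rinv_0_lt_compat; lra. }
        rewrite H. eapply Rle_trans; [apply ln_sub1; apply Rdiv_lt_0_compat; lra|].
        replace (t / tT) with (vT * t) by (unfold tT; field; lra). assert (vT * t - 1 = vT * (t - tT)) by (unfold tT; field; lra). nra. }
      assert (ln tT <= 0). { rewrite <- ln_1. apply ln_le'; lra. }
      assert (A - K * tT <= - delta) by (unfold tT; exact HAK).
      nra. }
  apply Rle_trans with (exp (-delta * wR)). 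
  { unfold wR. rewrite <- exp_pow. eapply Rle_trans; [exact HCh|]. apply pow_incr. split.
    rewrite HQ; left; apply exp_pos. rewrite HQ; apply exp_le'; lra. }
  assert (HwB : mR / (2*k*L) <= wR).
  { apply Rmult_le_reg_r with (2*k*L). nra. unfold Rdiv. rewrite Rmult_assoc, Rinv_l; [|nra]. nra. }
  apply Rle_trans with (E * exp (-(delta/2))^w). 2: lra.
  unfold E. rewrite exp_pow, <- exp_plus. apply exp_le'. fold wR.
  replace (- (delta * mR / (4 * k * L))) with (-(delta/2) * (mR / (2*k*L))) by (field; nra).
  nra.
Qed.


Fixpoint bsum (B : nat -> R) (W : nat) : R :=
  match W with O => 0 | S W' => bsum B W' + B W end.

Lemma gs_bound a W : 0 <= a < 1 -> bsum (fun w => a ^ w) W <= a / (1 - a).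
Proof.
  intros Ha. assert (Heq : bsum (fun w => a ^ w) W = a * (1 - a ^ W) / (1 - a)).
  { induction W as [|W IH]; simpl bsum. simpl; field; lra.
    rewrite IH. simpl. field. lra. }
  rewrite Heq. pose proof (pow_le a W ltac:(lra)).
  unfold Rdiv. apply Rmult_le_compat_r. left; apply Rinv_0_lt_compat; lra. nra.
Qed.

Lemma bsum_plus B1 B2 W : bsum (fun w => B1 w + B2 w) W = bsum B1 W + bsum B2 W.
Proof. induction W; simpl; [lra| rewrite IHW; ring]. Qed.

Lemma bsum_scal c B W : bsum (fun w => c * B w) W = c * bsum B W.
Proof. induction W; simpl; [ring| rewrite IHW; ring]. Qed.

Lemma bsum_nonneg B W : (forall w, 0 <= B w) -> 0 <= bsum B W.
Proof. intros H; induction W; simpl; [lra| specialize (H (S W)); lra]. Qed.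

Lemma epssum_bound (n m : nat) (f g : R) (B : nat -> R) :
  0 <= g ->
  (forall w, 0 <= B w) ->
  (forall w, (1 <= w <= n)%nat ->
     / 2^m * (1 + (1 - 2*f)^w)^m <= g / 2^m \/
     Binomial.C n w * (/ 2^m * (1 + (1 - 2*f)^w)^m) <= B w) ->
  forall W, (W <= n)%nat ->
  epssum n m f W <= g / 2^m * binsum n W + bsum B W.
Proof.
  intros Hg HB Hp W. induction W as [|W IH]; intros HW; cbn [epssum binsum bsum].
  - lra.
  - specialize (IH ltac:(lia)).
    pose proof (C_nonneg n (S W)).
    assert (0 <= g / 2^m) by (unfold Rdiv; apply Rmult_le_pos; [lra| left; apply Rinv_0_lt_compat, pow_lt; lra]).
    assert (Binomial.C n (S W) * / 2 ^ m * (1 + (1 - 2 * f) ^ S W) ^ m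
            <= g / 2^m * Binomial.C n (S W) + B (S W)).
    { rewrite Rmult_assoc. destruct (Hp (S W) ltac:(lia)) as [H1|H1].
      - specialize (HB (S W)). apply Rmult_le_compat_l with (r := Binomial.C n (S W)) in H1; auto. rewrite (Rmult_comm (g / 2^m)). eapply Rle_trans; [exact H1|]. lra.
      - specialize (HB (S W)). assert (0 <= g / 2^m * Binomial.C n (S W)) by (apply Rmult_le_pos; auto). lra. }
    rewrite Rmult_plus_distr_l. lra.
Qed.


Lemma D_pos alpha k : 0 < alpha < 1 -> 36/10 - 5/4 * log2 alpha <= k ->
  36/10 < k /\ 0 < k - Acst alpha k.
Proof.
  intros Ha Hk. unfold log2 in Hk.
  pose proof ln2_lt. pose proof ln2_pos. set (l := ln 2) in *.
  assert (Hla : ln alpha < 0). { rewrite <- ln_1. apply ln_increasing; lra. }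
  assert (Hla2 : 4/5 * (36/10 - k) * l <= ln alpha).
  { assert (5/4 * (ln alpha / l) * l = 5/4 * ln alpha) by (field; lra).
    assert ((36/10 - k) * l <= 5/4 * ln alpha).
    { rewrite <- H1. apply Rmult_le_compat_r; lra. }
    lra. }
  assert (Hk36 : 36/10 < k).
  { assert (ln alpha / l < 0) by (apply Rdiv_neg_pos; auto). lra. }
  split; auto.
  assert (HA : Acst alpha k = l + 1 + ln k - ln alpha).
  { unfold Acst, Rdiv. pose proof (exp_pos 1).
    rewrite ln_mult; [| apply Rmult_lt_0_compat; [apply Rmult_lt_0_compat|]; lra | apply Rinv_0_lt_compat; lra].
    rewrite ln_mult; [| apply Rmult_lt_0_compat; lra | lra].
    rewrite ln_mult; [| lra | lra].
    rewrite ln_exp, ln_Rinv; [|lra]. fold l. ring. }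
  rewrite HA.
  assert (Hlk : ln k <= ln (36/10) + k / (36/10) - 1).
  { assert (ln (k / (36/10)) = ln k - ln (36/10)).
    { unfold Rdiv. rewrite ln_mult, ln_Rinv; lra. }
    pose proof (ln_sub1 (k/(36/10)) ltac:(apply Rdiv_lt_0_compat; lra)). lra. }
  assert (H36 : ln (36/10) <= 2 * l - 1/10).
  { replace (36/10) with (2 * 2 * (9/10)) by lra. rewrite ln_mult, ln_mult; try lra.
    pose proof (ln_sub1 (9/10) ltac:(lra)). fold l. lra. }
  assert (0 <= (k - 36/10) * (3/4 - l)) by (apply Rmult_le_pos; lra).
  nra.
Qed.


Lemma wstar_spec n q : 0 <= q - 1 -> q < 2 ^ n ->
  (wstar n q < n)%nat /\ binsum n (wstar n q) <= q - 1 /\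
  q - 1 < binsum n (wstar n q) + Binomial.C n (S (wstar n q)).
Proof.
  intros H1 H2. unfold wstar. destruct (wsearch_spec n q H1 n) as [A [B C]].
  assert (wsearch n q n <> n).
  { intros E. rewrite E, binsum_full in B. lra. }
  destruct C as [C|C]; [contradiction|]. split; [lia| split; auto].
Qed.

Theorem lemma8 :
  forall (alpha : R) (c : nat),
    0 < alpha < 1 ->
    forall (gamma k : R),
      1 < gamma ->
      36 / 10 - 5 / 4 * log2 alpha <= k ->
      exists Nk : nat, (0 < Nk)%nat /\
        forall n m : nat,
          (Nk <= n)%nat ->
          INR m = alpha * INR n ->
          let q := 2 ^ (m + c) in
          let f := k * ln (INR m) / INR m in
          epsilon n m q f <= gamma * (2 ^ c / (q - 1)).
Proof.
  intros alpha c Ha gamma k Hg Hk.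
  destruct (D_pos alpha k Ha Hk) as [Hk36 HD].
  set (A := Acst alpha k) in *.
  set (D := k - A) in *.
  assert (HDdef : D = k - A) by reflexivity.
  assert (HA0 : 0 < A) by (apply Acst_pos; lra).
  set (gp := (1 + gamma)/2).
  assert (Hgp : 0 < ln gp). { rewrite <- ln_1. apply ln_increasing; unfold gp; lra. }
  set (lam := Rmin 1 (ln gp)).
  assert (Hlam : 0 < lam <= 1). { unfold lam. split. apply Rmin_glb_lt; lra. apply Rmin_l. }
  assert (Hexplam : exp lam <= gp).
  { apply Rle_trans with (exp (ln gp)). apply exp_le', Rmin_r. rewrite exp_ln; [lra| unfold gp; lra]. }
  set (delta := Rmin 1 (D/2)).
  assert (Hdel : 0 < delta <= 1 /\ delta <= D/2).
  { unfold delta. split; [split; [apply Rmin_glb_lt; lra| apply Rmin_l]| apply Rmin_r]. }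
  set (s := Rmin (1/2) ((gamma - 1)/8)).
  assert (Hs : 0 < s <= 1/2 /\ s <= (gamma-1)/8).
  { unfold s. split; [split; [apply Rmin_glb_lt; lra| apply Rmin_l]| apply Rmin_r]. }
  set (b := exp (-(delta/2))).
  assert (Hb : 0 < b < 1).
  { unfold b. split. apply exp_pos. rewrite <- exp_0. apply exp_increasing. lra. }
  set (e5 := (gamma - 1) * (1 - b) / (4 * b)).
  assert (He5 : 0 < e5). { unfold e5. apply Rdiv_lt_0_compat; nra. }
  set (t1 := t1c alpha k).
  assert (Ht1 : 0 < t1). { unfold t1, t1c. apply Rdiv_lt_0_compat; fold A; lra. }
  destruct (exp_dom (2*k)) as [L2 HL2].
  destruct (exp_dom (4*k*Rabs (ln e5)/delta + 1)) as [L5 HL5].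
  set (L3 := Rabs (ln (/(alpha*s))) / (k/2 - 1)).
  set (L4 := t1 * Rabs (ln (4*k/D))).
  set (L6 := 4*k*ln (/lam)/D).
  set (L0 := Rmax 1 (Rmax L2 (Rmax L5 (Rmax L3 (Rmax L4 L6))))).
  assert (HL0 : 1 <= L0 /\ L2 <= L0 /\ L5 <= L0 /\ L3 <= L0 /\ L4 <= L0 /\ L6 <= L0).
  { unfold L0.
    pose proof (Rmax_l 1 (Rmax L2 (Rmax L5 (Rmax L3 (Rmax L4 L6))))).
    pose proof (Rmax_r 1 (Rmax L2 (Rmax L5 (Rmax L3 (Rmax L4 L6))))).
    pose proof (Rmax_l L2 (Rmax L5 (Rmax L3 (Rmax L4 L6)))).
    pose proof (Rmax_r L2 (Rmax L5 (Rmax L3 (Rmax L4 L6)))).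
    pose proof (Rmax_l L5 (Rmax L3 (Rmax L4 L6))).
    pose proof (Rmax_r L5 (Rmax L3 (Rmax L4 L6))).
    pose proof (Rmax_l L3 (Rmax L4 L6)).
    pose proof (Rmax_r L3 (Rmax L4 L6)).
    pose proof (Rmax_l L4 L6). pose proof (Rmax_r L4 L6). lra. }
  destruct HL0 as [HL01 [HL02 [HL05 [HL03 [HL04 HL06]]]]].
  assert (Hpos1 : 0 < exp L0 / alpha) by (apply Rdiv_lt_0_compat; [apply exp_pos|lra]).
  assert (Hpos2 : 0 <= INR (c+1) / (1 - alpha)) by (apply Rdiv_le_0_compat; [apply pos_INR|lra]).
  destruct (INR_archimed 1 (exp L0 / alpha + INR (c+1)/(1-alpha) + 1) ltac:(lra)) as [N HN].
  rewrite Rmult_1_r in HN.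
  exists N. split.
  { destruct N; [simpl in HN; lra| lia]. }
  intros n m Hn Hmn q f.
  apply le_INR in Hn.
  set (mR := INR m) in *.
  assert (HmR : exp L0 <= mR).
  { rewrite Hmn. apply Rmult_le_reg_l with (/alpha). apply Rinv_0_lt_compat; lra.
    rewrite <- Rmult_assoc, Rinv_l, Rmult_1_l; [|lra]. rewrite Rmult_comm. unfold Rdiv in HN. lra. }
  assert (HmR0 : 0 < mR) by (pose proof (exp_pos L0); lra).
  set (L := ln mR) in *.
  assert (HLL0 : L0 <= L) by (rewrite <- (ln_exp L0); apply ln_le'; [apply exp_pos| auto]).
  assert (HeL : exp L = mR) by (apply exp_ln; auto).
  assert (Hnmc : (m + c < n)%nat).
  { apply INR_lt. rewrite plus_INR. fold mR.
    assert (INR (c+1) <= (1 - alpha) * INR n).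
    { assert (INR (c + 1) / (1 - alpha) <= INR n) by lra.
      apply Rmult_le_reg_l with (/(1-alpha)). apply Rinv_0_lt_compat; lra.
      rewrite <- Rmult_assoc, Rinv_l, Rmult_1_l; [|lra]. rewrite Rmult_comm. exact H. }
    rewrite plus_INR in H. simpl in H. lra. }
  assert (HL1 : 1 <= L) by lra.
  assert (Hkm : 2*k*L <= mR) by (rewrite <- HeL; apply HL2; lra).
  assert (HDk : D <= k) by (unfold D; lra).
  assert (Heta : etac alpha k L <= D/(4*k)).
  { unfold etac. fold t1. apply Rle_trans with (exp (- ln (4*k/D))).
    - apply exp_le'. apply Ropp_le_contravar.
      assert (t1 * Rabs (ln (4 * k / D)) <= L) by (unfold L4 in HL04; lra).
      apply Rmult_le_reg_l with t1; auto. replace (t1 * (L / t1)) with L by (field; lra).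
      pose proof (Rle_abs (ln (4*k/D))). nra.
    - rewrite exp_Ropp, exp_ln. right; field; lra. apply Rdiv_lt_0_compat; lra. }
  assert (Hlnl : 0 <= ln (/lam)). { rewrite <- ln_1. apply ln_le'. lra. rewrite <- Rinv_1. apply Rinv_le_contravar; lra. }
  set (r := ln (/lam) / L).
  assert (Hr : 0 <= r <= D/(4*k)).
  { unfold r. split. apply Rdiv_le_0_compat; lra.
    apply Rmult_le_reg_r with L; [lra|]. unfold Rdiv. rewrite Rmult_assoc, Rinv_l, Rmult_1_r; [|lra].
    unfold L6 in HL06. assert (4 * k * ln (/ lam) / D <= L) by lra.
    apply Rmult_le_reg_l with (4*k/D). apply Rdiv_lt_0_compat; lra.
    replace (4 * k / D * (D * / (4 * k) * L)) with L by (field; lra).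
    replace (4 * k / D * ln (/ lam)) with (4 * k * ln (/ lam) / D) by (field; lra). lra. }
  assert (HvT : vTc lam L = 1 + r) by (unfold vTc, r; field; lra).
  assert (HK : k - D/4 <= Kc alpha k L).
  { unfold Kc. assert (k * etac alpha k L <= D/4).
    { apply Rmult_le_compat_l with (r := k) in Heta; [|lra].
      replace (k * (D / (4*k))) with (D/4) in Heta by (field; lra). lra. }
    lra. }
  assert (Hc1 : vTc lam L <= Kc alpha k L).
  { rewrite HvT. assert (k * r <= D/4).
    { destruct Hr as [_ Hr]. apply Rmult_le_compat_l with (r := k) in Hr; [|lra].
      replace (k * (D / (4*k))) with (D/4) in Hr by (field; lra). lra. }
    nra. }
  assert (Hc2 : A - Kc alpha k L / vTc lam L <= - delta).
  { rewrite HvT. assert (k * r <= D/4).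
    { destruct Hr as [_ Hr]. apply Rmult_le_compat_l with (r := k) in Hr; [|lra].
      replace (k * (D / (4*k))) with (D/4) in Hr by (field; lra). lra. }
    assert ((A + delta) * (1 + r) <= Kc alpha k L).
    { assert ((A + delta) * r <= k * r) by (apply Rmult_le_compat_r; lra).
      assert ((A + delta) * (1 + r) = A + delta + (A + delta) * r) by ring. lra. }
    assert ((A + delta) <= Kc alpha k L / (1 + r)).
    { apply Rmult_le_reg_r with (1 + r); [lra|]. unfold Rdiv. rewrite Rmult_assoc, Rinv_l; lra. }
    lra. }
  set (a := INR n * exp (-(k*L/2))).
  set (E := exp (-(delta*mR/(4*k*L)))).
  assert (Ha0 : 0 <= a) by (unfold a; apply Rmult_le_pos; [apply pos_INR| left; apply exp_pos]).
  assert (Has : a <= s).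
  { unfold a. assert (INR n = exp L / alpha) by (rewrite HeL, Hmn; field; lra).
    rewrite H. replace (exp L / alpha * exp (- (k * L / 2))) with (exp (L + - (k*L/2)) / alpha)
      by (rewrite exp_plus; field; lra).
    apply Rmult_le_reg_r with alpha; [lra|]. unfold Rdiv. rewrite Rmult_assoc, Rinv_l, Rmult_1_r; [|lra].
    apply Rle_trans with (exp (ln (alpha * s))).
    2: rewrite exp_ln; [lra| apply Rmult_lt_0_compat; lra].
    apply exp_le'.
    assert (Rabs (ln (/ (alpha * s))) / (k / 2 - 1) <= L) by (unfold L3 in HL03; lra).
    assert (Rabs (ln (/ (alpha * s))) <= L * (k/2 - 1)).
    { apply Rmult_le_reg_r with (/(k/2-1)). apply Rinv_0_lt_compat; lra.
      rewrite Rmult_assoc, Rinv_r, Rmult_1_r; [|lra]. exact H0. }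
    pose proof (Rle_abs (ln (/ (alpha * s)))). rewrite ln_Rinv in H1, H2; [|apply Rmult_lt_0_compat; lra..].
    assert (L * (k/2 - 1) = -(L + - (k * L * / 2))) by field. lra. }
  assert (HE0 : 0 < E) by apply exp_pos.
  assert (HEe : E <= e5).
  { unfold E. apply Rle_trans with (exp (ln e5)); [| rewrite exp_ln; lra].
    apply exp_le'.
    assert (H5 := HL5 L ltac:(lra)). rewrite HeL in H5.
    assert (0 <= 4 * k * Rabs (ln e5) / delta) by (apply Rdiv_le_0_compat; [pose proof (Rabs_pos (ln e5)); nra| lra]).
    assert (4 * k * Rabs (ln e5) / delta * L <= mR) by nra.
    assert (Rabs (ln e5) <= delta * mR / (4 * k * L)).
    { apply Rmult_le_reg_r with (4*k*L/delta). apply Rdiv_lt_0_compat; nra.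
      replace (delta * mR / (4 * k * L) * (4 * k * L / delta)) with mR by (field; repeat split; lra).
      replace (Rabs (ln e5) * (4 * k * L / delta)) with (4 * k * Rabs (ln e5) / delta * L) by (field; lra). lra. }
    pose proof (Rle_abs (- ln e5)). rewrite Rabs_Ropp in H2. lra. }
  set (B := fun w : nat => a ^ w + E * exp (-(delta/2)) ^ w).
  assert (HB0 : forall w, 0 <= B w).
  { intros w. unfold B. pose proof (pow_le a w Ha0). pose proof (pow_le (exp (-(delta/2))) w (Rlt_le _ _ (exp_pos _))). nra. }
  assert (Hpt : forall w, (1 <= w <= n)%nat ->
     / 2^m * (1 + (1 - 2*f)^w)^m <= gp / 2^m \/
     Binomial.C n w * (/ 2^m * (1 + (1 - 2*f)^w)^m) <= B w).
  { intros w Hw. destruct (point alpha k lam delta n m w Ha Hmn HL1 Hkm ltac:(lra) Hlam (proj1 Hdel) Hc1 Hc2 Hw) as [H|H].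
    - left. unfold f. eapply Rle_trans; [exact H|]. unfold Rdiv. apply Rmult_le_compat_r; auto.
      left; apply Rinv_0_lt_compat, pow_lt; lra.
    - right. unfold f, B. exact H. }
  assert (HBs : forall W, bsum B W <= (gamma - 1)/2).
  { intros W. unfold B. rewrite bsum_plus, bsum_scal.
    pose proof (gs_bound a W ltac:(lra)).
    pose proof (gs_bound (exp (-(delta/2))) W ltac:(fold b; lra)). fold b in H0 |- *.
    assert (a / (1 - a) <= 2 * s).
    { apply Rmult_le_reg_r with (1 - a); [lra|]. unfold Rdiv. rewrite Rmult_assoc, Rinv_l; [|lra]. rewrite Rmult_1_r. assert (0 <= s * (s - a)) by (apply Rmult_le_pos; lra). nra. }
    assert (E * bsum (fun w => b ^ w) W <= e5 * (b / (1 - b))).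
    { apply Rmult_le_compat; try lra. apply bsum_nonneg. intros; apply pow_le; lra. }
    assert (e5 * (b / (1 - b)) = (gamma - 1)/4) by (unfold e5; field; lra).
    change (bsum (pow a) W) with (bsum (fun w => a^w) W). change (bsum (pow b) W) with (bsum (fun w => b^w) W). lra. }
  assert (Hq1 : 1 <= q - 1).
  { unfold q. assert (1 <= m)%nat. { destruct (Nat.eq_dec m 0) as [E0|E0]; [unfold mR in HmR0; rewrite E0 in HmR0; simpl in HmR0; lra| lia]. }
    assert (2 ^ 1 <= 2 ^ (m + c)) by (apply Rle_pow; [lra| lia]). simpl in H0. lra. }
  assert (Hqn : q < 2 ^ n) by (unfold q; apply Rlt_pow; [lra| lia]).
  destruct (wstar_spec n q ltac:(lra) Hqn) as [Hw1 [Hw2 Hw3]].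
  set (W := wstar n q) in *.
  assert (Heps := epssum_bound n m f gp B ltac:(unfold gp; lra) HB0 Hpt W ltac:(lia)).
  assert (Hrem : 0 <= rem n q <= Binomial.C n (S W)) by (unfold rem; fold W; lra).
  set (hS := / 2^m * (1 + (1 - 2*f)^(S W))^m).
  assert (HhS : 0 <= hS).
  { unfold hS. apply Rmult_le_pos. left; apply Rinv_0_lt_compat, pow_lt; lra.
    apply pow_le. assert (0 <= (1 - 2*f)^(S W)).
    { apply pow_le. unfold f. fold mR L. assert (k * L / mR <= 1/2).
      { apply Rmult_le_reg_r with mR; auto. unfold Rdiv. rewrite Rmult_assoc, Rinv_l; lra. }
      lra. }
    lra. }
  assert (Hr2 : rem n q / 2^m * (1 + (1 - 2*f)^(S W))^m <= gp / 2^m * rem n q + B (S W)).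
  { replace (rem n q / 2^m * (1 + (1 - 2*f)^(S W))^m) with (rem n q * hS) by (unfold hS; field; apply pow_nonzero; lra).
    assert (0 <= gp / 2^m) by (apply Rdiv_le_0_compat; [unfold gp; lra| apply pow_lt; lra]).
    destruct (Hpt (S W) ltac:(lia)) as [Hx|Hx]; fold hS in Hx.
    - assert (rem n q * hS <= rem n q * (gp / 2^m)) by (apply Rmult_le_compat_l; lra).
      pose proof (HB0 (S W)). rewrite (Rmult_comm (gp / 2^m)). lra.
    - assert (rem n q * hS <= Binomial.C n (S W) * hS) by (apply Rmult_le_compat_r; lra).
      assert (0 <= gp / 2^m * rem n q) by (apply Rmult_le_pos; lra). lra. }
  assert (HBsum := HBs (S W)). simpl bsum in HBsum.
  assert (Hsum : epssum n m f W + rem n q / 2^m * (1 + (1 - 2*f)^(S W))^m <= gamma * 2^c).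
  { assert (Hbr : binsum n W + rem n q = q - 1) by (unfold rem; fold W; ring).
    assert (gp / 2^m * (q - 1) <= gp * 2^c).
    { unfold q. rewrite pow_add. assert (0 < 2^m) by (apply pow_lt; lra).
      assert (0 < 2^c) by (apply pow_lt; lra).
      replace (gp / 2^m * (2^m * 2^c - 1)) with (gp * 2^c - gp / 2^m) by (field; lra).
      assert (0 <= gp / 2^m) by (apply Rdiv_le_0_compat; [unfold gp; lra| lra]). lra. }
    assert (1 <= 2^c) by (apply pow_R1_Rle; lra).
    assert ((gamma - 1)/2 <= (gamma - 1)/2 * 2^c) by nra.
    assert (gp / 2 ^ m * binsum n W + gp / 2 ^ m * rem n q = gp / 2^m * (q - 1)) by (rewrite <- Hbr; ring).
    assert (gp * 2^c + (gamma - 1)/2 * 2^c = gamma * 2^c) by (unfold gp; field).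
    lra. }
  unfold epsilon. fold W.
  replace (gamma * (2 ^ c / (q - 1))) with (/ (q - 1) * (gamma * 2^c)) by (field; lra).
  apply Rmult_le_compat_l. left; apply Rinv_0_lt_compat; lra.
  exact Hsum.
Qed.
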